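(* If $f:[-1,1]\to\mathbb{R}$ is $3$-convex, then \[ f\Bigl(-\tfrac{\sqrt3}{3}\Bigr)+f\Bigl(\tfrac{\sqrt3}{3}\Bigr)\;\le\;\tfrac{2}{3}\Bigl(f\bigl(-\tfrac{\sqrt2}{2}\bigr)+f(0)+f\bigl(\tfrac{\sqrt2}{2}\bigr)\Bigr)\;\le\;\int_{-1}^1 f(x)\,dx . \]
   Context: Divided differences are defined recursively by $[x_1;f]:=f(x_1)$ and $[x_1,\dots,x_{m+1};f]:=\frac{[x_2,\dots,x_{m+1};f]-[x_1,\dots,x_m;f]}{x_{m+1}-x_1}$ for pairwise distinct points. For $m\in\mathbb{N}$, a function $f$ on an interval $I$ is called $m$-convex if $[x_1,\dots,x_{m+2};f]\ge 0$ for all pairwise distinct $x_1,\dots,x_{m+2}\in I$. Integrals are Riemann integrals (an $m$-convex function on a compact interval is Riemann integrable). *)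

(* Defs.v *)
From Stdlib Require Import Reals.
From Coquelicot Require Import Coquelicot.
Open Scope R_scope.

(* divdiff f x i k = [x_i, x_{i+1}, ..., x_{i+k}; f], following the recursive
   definition [x_1;f] = f(x_1),
   [x_1..x_{m+1};f] = ([x_2..x_{m+1};f] - [x_1..x_m;f]) / (x_{m+1} - x_1). *)
Fixpoint divdiff (f : R -> R) (x : nat -> R) (i k : nat) : R :=
  match k with
  | O => f (x i)
  | S k' => (divdiff f x (S i) k' - divdiff f x i k') / (x (i + S k')%nat - x i)
  end.

Definition m_convex_on (m : nat) (a b : R) (f : R -> R) : Prop :=
  forall x : nat -> R,
    (forall i, (i < m + 2)%nat -> a <= x i <= b) ->
    (forall i j, (i < m + 2)%nat -> (j < m + 2)%nat -> i <> j -> x i <> x j) ->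
    0 <= divdiff f x 0 (m + 1).

(* Main.v *)
Require Import Defs.
From Stdlib Require Import Reals Lra Lia Classical.
From Coquelicot Require Import Coquelicot.
Open Scope R_scope.

Ltac dneq := let H := fresh in intro H; match goal with Hd : ?u <> ?v |- False => apply Hd; lra end.

Definition S5 (g : R -> R) x0 x1 x2 x3 x4 :=
  g x0 / ((x0-x1)*(x0-x2)*(x0-x3)*(x0-x4)) +
  g x1 / ((x1-x0)*(x1-x2)*(x1-x3)*(x1-x4)) +
  g x2 / ((x2-x0)*(x2-x1)*(x2-x3)*(x2-x4)) +
  g x3 / ((x3-x0)*(x3-x1)*(x3-x2)*(x3-x4)) +
  g x4 / ((x4-x0)*(x4-x1)*(x4-x2)*(x4-x3)).

Definition L2 (g : R -> R) x0 x1 := g x0 / (x0-x1) + g x1 / (x1-x0).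
Definition L3 (g : R -> R) x0 x1 x2 :=
  g x0 / ((x0-x1)*(x0-x2)) + g x1 / ((x1-x0)*(x1-x2)) + g x2 / ((x2-x0)*(x2-x1)).
Definition L4 (g : R -> R) x0 x1 x2 x3 :=
  g x0 / ((x0-x1)*(x0-x2)*(x0-x3)) + g x1 / ((x1-x0)*(x1-x2)*(x1-x3)) +
  g x2 / ((x2-x0)*(x2-x1)*(x2-x3)) + g x3 / ((x3-x0)*(x3-x1)*(x3-x2)).

Lemma step2 g x0 x1 : x0 <> x1 -> (g x1 - g x0) / (x1 - x0) = L2 g x0 x1.
Proof. intros. unfold L2. field. split; dneq. Qed.

Lemma step3 g x0 x1 x2 : x0 <> x1 -> x0 <> x2 -> x1 <> x2 ->
  (L2 g x1 x2 - L2 g x0 x1) / (x2 - x0) = L3 g x0 x1 x2.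
Proof.
  intros. unfold L2, L3.
  transitivity (g x0 * (- / (x0 - x1) * / (x2 - x0)) +
                g x1 * ((/ (x1 - x2) - / (x1 - x0)) * / (x2 - x0)) +
                g x2 * (/ (x2 - x1) * / (x2 - x0))).
  { unfold Rdiv. ring. }
  replace (- / (x0 - x1) * / (x2 - x0)) with (/ ((x0-x1)*(x0-x2))) by (field; repeat split; dneq).
  replace ((/ (x1 - x2) - / (x1 - x0)) * / (x2 - x0)) with (/ ((x1-x0)*(x1-x2))) by (field; repeat split; dneq).
  replace (/ (x2 - x1) * / (x2 - x0)) with (/ ((x2-x0)*(x2-x1))) by (field; repeat split; dneq).
  unfold Rdiv. ring.
Qed.

Lemma step4 g x0 x1 x2 x3 : x0 <> x1 -> x0 <> x2 -> x0 <> x3 -> x1 <> x2 -> x1 <> x3 -> x2 <> x3 ->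
  (L3 g x1 x2 x3 - L3 g x0 x1 x2) / (x3 - x0) = L4 g x0 x1 x2 x3.
Proof.
  intros. unfold L3, L4.
  transitivity (g x0 * (- / ((x0 - x1) * (x0 - x2)) * / (x3 - x0)) +
                g x1 * ((/ ((x1 - x2) * (x1 - x3)) - / ((x1 - x0) * (x1 - x2))) * / (x3 - x0)) +
                g x2 * ((/ ((x2 - x1) * (x2 - x3)) - / ((x2 - x0) * (x2 - x1))) * / (x3 - x0)) +
                g x3 * (/ ((x3 - x1) * (x3 - x2)) * / (x3 - x0))).
  { unfold Rdiv. ring. }
  replace (- / ((x0 - x1) * (x0 - x2)) * / (x3 - x0)) with (/ ((x0-x1)*(x0-x2)*(x0-x3))) by (field; repeat split; dneq).
  replace ((/ ((x1 - x2) * (x1 - x3)) - / ((x1 - x0) * (x1 - x2))) * / (x3 - x0)) with (/ ((x1-x0)*(x1-x2)*(x1-x3))) by (field; repeat split; dneq).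
  replace ((/ ((x2 - x1) * (x2 - x3)) - / ((x2 - x0) * (x2 - x1))) * / (x3 - x0)) with (/ ((x2-x0)*(x2-x1)*(x2-x3))) by (field; repeat split; dneq).
  replace (/ ((x3 - x1) * (x3 - x2)) * / (x3 - x0)) with (/ ((x3-x0)*(x3-x1)*(x3-x2))) by (field; repeat split; dneq).
  unfold Rdiv. ring.
Qed.

Lemma step5 g x0 x1 x2 x3 x4 : x0 <> x1 -> x0 <> x2 -> x0 <> x3 -> x0 <> x4 -> x1 <> x2 -> x1 <> x3 ->
  x1 <> x4 -> x2 <> x3 -> x2 <> x4 -> x3 <> x4 ->
  (L4 g x1 x2 x3 x4 - L4 g x0 x1 x2 x3) / (x4 - x0) = S5 g x0 x1 x2 x3 x4.
Proof.
  intros. unfold L4, S5.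
  transitivity (g x0 * (- / ((x0 - x1) * (x0 - x2) * (x0 - x3)) * / (x4 - x0)) +
                g x1 * ((/ ((x1 - x2) * (x1 - x3) * (x1 - x4)) - / ((x1 - x0) * (x1 - x2) * (x1 - x3))) * / (x4 - x0)) +
                g x2 * ((/ ((x2 - x1) * (x2 - x3) * (x2 - x4)) - / ((x2 - x0) * (x2 - x1) * (x2 - x3))) * / (x4 - x0)) +
                g x3 * ((/ ((x3 - x1) * (x3 - x2) * (x3 - x4)) - / ((x3 - x0) * (x3 - x1) * (x3 - x2))) * / (x4 - x0)) +
                g x4 * (/ ((x4 - x1) * (x4 - x2) * (x4 - x3)) * / (x4 - x0))).
  { unfold Rdiv. ring. }
  replace (- / ((x0 - x1) * (x0 - x2) * (x0 - x3)) * / (x4 - x0)) with (/ ((x0-x1)*(x0-x2)*(x0-x3)*(x0-x4))) by (field; repeat split; dneq).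
  replace ((/ ((x1 - x2) * (x1 - x3) * (x1 - x4)) - / ((x1 - x0) * (x1 - x2) * (x1 - x3))) * / (x4 - x0)) with (/ ((x1-x0)*(x1-x2)*(x1-x3)*(x1-x4))) by (field; repeat split; dneq).
  replace ((/ ((x2 - x1) * (x2 - x3) * (x2 - x4)) - / ((x2 - x0) * (x2 - x1) * (x2 - x3))) * / (x4 - x0)) with (/ ((x2-x0)*(x2-x1)*(x2-x3)*(x2-x4))) by (field; repeat split; dneq).
  replace ((/ ((x3 - x1) * (x3 - x2) * (x3 - x4)) - / ((x3 - x0) * (x3 - x1) * (x3 - x2))) * / (x4 - x0)) with (/ ((x3-x0)*(x3-x1)*(x3-x2)*(x3-x4))) by (field; repeat split; dneq).
  replace (/ ((x4 - x1) * (x4 - x2) * (x4 - x3)) * / (x4 - x0)) with (/ ((x4-x0)*(x4-x1)*(x4-x2)*(x4-x3))) by (field; repeat split; dneq).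
  unfold Rdiv. ring.
Qed.

Definition inI (x : R) := -1 <= x <= 1.

Definition K (g : R -> R) := forall x0 x1 x2 x3 x4,
  inI x0 -> inI x1 -> inI x2 -> inI x3 -> inI x4 ->
  x0 <> x1 -> x0 <> x2 -> x0 <> x3 -> x0 <> x4 ->
  x1 <> x2 -> x1 <> x3 -> x1 <> x4 ->
  x2 <> x3 -> x2 <> x4 -> x3 <> x4 ->
  0 <= S5 g x0 x1 x2 x3 x4.

Lemma key (f : R -> R) : m_convex_on 3 (-1) 1 f -> K f.
Proof.
  intros hf x0 x1 x2 x3 x4 h0 h1 h2 h3 h4 d01 d02 d03 d04 d12 d13 d14 d23 d24 d34.
  set (x := fun i : nat => match i with 0%nat => x0 | 1%nat => x1 | 2%nat => x2 | 3%nat => x3 | _ => x4 end).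
  assert (H := hf x).
  assert (E : divdiff f x 0 (3+1) = S5 f x0 x1 x2 x3 x4).
  { simpl.
    rewrite (step2 f x0 x1), (step2 f x1 x2), (step2 f x2 x3), (step2 f x3 x4) by assumption.
    rewrite (step3 f x0 x1 x2), (step3 f x1 x2 x3), (step3 f x2 x3 x4) by assumption.
    rewrite (step4 f x0 x1 x2 x3), (step4 f x1 x2 x3 x4) by assumption.
    apply step5; assumption. }
  rewrite <- E. apply H.
  - intros i Hi. destruct i as [|[|[|[|[|i]]]]]; simpl; unfold inI in *; try lra; lia.
  - intros i j Hi Hj Hij.
    destruct i as [|[|[|[|[|i]]]]]; destruct j as [|[|[|[|[|j]]]]]; simpl;
      try lia; try congruence; auto.
Qed.

Definition lag (g : R -> R) n0 n1 n2 n3 y :=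
  g n0 * ((y-n1)*(y-n2)*(y-n3)) / ((n0-n1)*(n0-n2)*(n0-n3)) +
  g n1 * ((y-n0)*(y-n2)*(y-n3)) / ((n1-n0)*(n1-n2)*(n1-n3)) +
  g n2 * ((y-n0)*(y-n1)*(y-n3)) / ((n2-n0)*(n2-n1)*(n2-n3)) +
  g n3 * ((y-n0)*(y-n1)*(y-n2)) / ((n3-n0)*(n3-n1)*(n3-n2)).

Definition om n0 n1 n2 n3 y := (y-n0)*(y-n1)*(y-n2)*(y-n3).

Lemma interp_eq g n0 n1 n2 n3 y :
  n0 <> n1 -> n0 <> n2 -> n0 <> n3 -> n0 <> y ->
  n1 <> n2 -> n1 <> n3 -> n1 <> y -> n2 <> n3 -> n2 <> y -> n3 <> y ->
  g y - lag g n0 n1 n2 n3 y = S5 g n0 n1 n2 n3 y * om n0 n1 n2 n3 y.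
Proof.
  intros d01 d02 d03 d04 d12 d13 d14 d23 d24 d34.
  unfold S5, om.
  transitivity (g n0 * (/ ((n0-n1)*(n0-n2)*(n0-n3)*(n0-y)) * ((y-n0)*(y-n1)*(y-n2)*(y-n3))) +
    g n1 * (/ ((n1-n0)*(n1-n2)*(n1-n3)*(n1-y)) * ((y-n0)*(y-n1)*(y-n2)*(y-n3))) +
    g n2 * (/ ((n2-n0)*(n2-n1)*(n2-n3)*(n2-y)) * ((y-n0)*(y-n1)*(y-n2)*(y-n3))) +
    g n3 * (/ ((n3-n0)*(n3-n1)*(n3-n2)*(n3-y)) * ((y-n0)*(y-n1)*(y-n2)*(y-n3))) +
    g y * (/ ((y-n0)*(y-n1)*(y-n2)*(y-n3)) * ((y-n0)*(y-n1)*(y-n2)*(y-n3)))); [|unfold Rdiv; ring].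
  replace (/ ((n0-n1)*(n0-n2)*(n0-n3)*(n0-y)) * ((y-n0)*(y-n1)*(y-n2)*(y-n3)))
    with (- (((y-n1)*(y-n2)*(y-n3)) / ((n0-n1)*(n0-n2)*(n0-n3)))) by (field; repeat split; dneq).
  replace (/ ((n1-n0)*(n1-n2)*(n1-n3)*(n1-y)) * ((y-n0)*(y-n1)*(y-n2)*(y-n3)))
    with (- (((y-n0)*(y-n2)*(y-n3)) / ((n1-n0)*(n1-n2)*(n1-n3)))) by (field; repeat split; dneq).
  replace (/ ((n2-n0)*(n2-n1)*(n2-n3)*(n2-y)) * ((y-n0)*(y-n1)*(y-n2)*(y-n3)))
    with (- (((y-n0)*(y-n1)*(y-n3)) / ((n2-n0)*(n2-n1)*(n2-n3)))) by (field; repeat split; dneq).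
  replace (/ ((n3-n0)*(n3-n1)*(n3-n2)*(n3-y)) * ((y-n0)*(y-n1)*(y-n2)*(y-n3)))
    with (- (((y-n0)*(y-n1)*(y-n2)) / ((n3-n0)*(n3-n1)*(n3-n2)))) by (field; repeat split; dneq).
  replace (/ ((y-n0)*(y-n1)*(y-n2)*(y-n3)) * ((y-n0)*(y-n1)*(y-n2)*(y-n3))) with 1
    by (field; repeat split; dneq).
  unfold lag, Rdiv. ring.
Qed.

Lemma interp_sign g n0 n1 n2 n3 y : K g ->
  inI n0 -> inI n1 -> inI n2 -> inI n3 -> inI y ->
  n0 <> n1 -> n0 <> n2 -> n0 <> n3 -> n0 <> y ->
  n1 <> n2 -> n1 <> n3 -> n1 <> y -> n2 <> n3 -> n2 <> y -> n3 <> y ->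
  0 <= (g y - lag g n0 n1 n2 n3 y) * om n0 n1 n2 n3 y.
Proof.
  intros HK i0 i1 i2 i3 i4 d01 d02 d03 d04 d12 d13 d14 d23 d24 d34.
  rewrite interp_eq by assumption.
  assert (H := HK n0 n1 n2 n3 y i0 i1 i2 i3 i4 d01 d02 d03 d04 d12 d13 d14 d23 d24 d34).
  rewrite Rmult_assoc. apply Rmult_le_pos; [exact H|]. apply Rle_0_sqr.
Qed.

Lemma K_sym g : K g -> K (fun x => g (- x)).
Proof.
  intros HK x0 x1 x2 x3 x4 i0 i1 i2 i3 i4 d01 d02 d03 d04 d12 d13 d14 d23 d24 d34.
  assert (H := HK (-x0) (-x1) (-x2) (-x3) (-x4)).
  unfold inI in *.
  assert (E : S5 (fun x => g (- x)) x0 x1 x2 x3 x4 = S5 g (-x0) (-x1) (-x2) (-x3) (-x4)).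
  { unfold S5.
    replace ((- x0 - - x1) * (- x0 - - x2) * (- x0 - - x3) * (- x0 - - x4)) with ((x0-x1)*(x0-x2)*(x0-x3)*(x0-x4)) by ring.
    replace ((- x1 - - x0) * (- x1 - - x2) * (- x1 - - x3) * (- x1 - - x4)) with ((x1-x0)*(x1-x2)*(x1-x3)*(x1-x4)) by ring.
    replace ((- x2 - - x0) * (- x2 - - x1) * (- x2 - - x3) * (- x2 - - x4)) with ((x2-x0)*(x2-x1)*(x2-x3)*(x2-x4)) by ring.
    replace ((- x3 - - x0) * (- x3 - - x1) * (- x3 - - x2) * (- x3 - - x4)) with ((x3-x0)*(x3-x1)*(x3-x2)*(x3-x4)) by ring.
    replace ((- x4 - - x0) * (- x4 - - x1) * (- x4 - - x2) * (- x4 - - x3)) with ((x4-x0)*(x4-x1)*(x4-x2)*(x4-x3)) by ring.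
    reflexivity. }
  rewrite E. apply H; try lra; dneq.
Qed.

Lemma cont_eps h x : continuous h x -> forall eps, 0 < eps -> exists d, 0 < d /\
  forall y, Rabs (y - x) < d -> Rabs (h y - h x) < eps.
Proof.
  intros Hc eps He.
  destruct (proj1 (filterlim_locally h (h x)) Hc (mkposreal eps He)) as [d Hd].
  exists d. split; [apply cond_pos|].
  intros y Hy. apply (Hd y). exact Hy.
Qed.

Lemma eps_cont h x : (forall eps, 0 < eps -> exists d, 0 < d /\
  forall y, Rabs (y - x) < d -> Rabs (h y - h x) < eps) -> continuous h x.
Proof.
  intros H. apply filterlim_locally. intros eps.
  destruct (H eps (cond_pos eps)) as [d [Hd Hy]].
  exists (mkposreal d Hd). intros y Hb. apply Hy. exact Hb.
Qed.

Lemma lag_node g n0 n1 n2 n3 : n0 <> n1 -> n0 <> n2 -> n0 <> n3 ->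
  lag g n0 n1 n2 n3 n0 = g n0.
Proof.
  intros; unfold lag.
  replace (n0 - n0) with 0 by ring.
  transitivity (g n0 * ((n0-n1)*(n0-n2)*(n0-n3)) / ((n0-n1)*(n0-n2)*(n0-n3))).
  { unfold Rdiv; ring. }
  field; repeat split; dneq.
Qed.

Lemma lag_cont g n0 n1 n2 n3 x : continuous (lag g n0 n1 n2 n3) x.
Proof.
  assert (H : ex_derive (lag g n0 n1 n2 n3) x) by (unfold lag; auto_derive; auto).
  exact (ex_derive_continuous _ _ H).
Qed.

Lemma sgn_pos u v : 0 <= u * v -> 0 < v -> 0 <= u.
Proof. intros. nra. Qed.
Lemma sgn_neg u v : 0 <= u * v -> v < 0 -> u <= 0.
Proof. intros. nra. Qed.
Lemma sgn3 u v : u * v <= 0 -> 0 < v -> u <= 0.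
Proof. intros. nra. Qed.
Lemma sgn4 u v : u * v <= 0 -> v < 0 -> 0 <= u.
Proof. intros. nra. Qed.

Lemma K_cont g x0 : K g -> -1 < x0 < 1 -> continuous g x0.
Proof.
  intros HK Hx.
  set (d := (1 - Rabs x0) / 4).
  assert (Hd : 0 < d) by (unfold d; destruct (Rabs_def2 x0 1) ; unfold Rabs; destruct Rcase_abs; lra).
  assert (Hd2 : -1 <= x0 - 3 * d /\ x0 + 3 * d <= 1)
    by (unfold d; unfold Rabs; destruct Rcase_abs; lra).
  apply eps_cont. intros eps He.
  destruct (cont_eps _ _ (lag_cont g x0 (x0-d) (x0-2*d) (x0-3*d) x0) eps He) as [d1 [Hd1 H1]].
  destruct (cont_eps _ _ (lag_cont g x0 (x0+d) (x0+2*d) (x0+3*d) x0) eps He) as [d2 [Hd2' H2]].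
  rewrite lag_node in H1 by lra. rewrite lag_node in H2 by lra.
  exists (Rmin d (Rmin d1 d2)). split.
  { apply Rmin_pos; [lra| apply Rmin_pos; lra]. }
  intros y Hy.
  assert (Hy1 : Rabs (y - x0) < d) by (eapply Rlt_le_trans; [exact Hy| apply Rmin_l]).
  assert (Hy2 : Rabs (y - x0) < d1) by (eapply Rlt_le_trans; [exact Hy| eapply Rle_trans; [apply Rmin_r| apply Rmin_l]]).
  assert (Hy3 : Rabs (y - x0) < d2) by (eapply Rlt_le_trans; [exact Hy| eapply Rle_trans; [apply Rmin_r| apply Rmin_r]]).
  specialize (H1 y Hy2). specialize (H2 y Hy3).
  apply Rabs_def2 in Hy1.
  destruct (Req_dec y x0) as [E|Ne].
  { subst y. replace (g x0 - g x0) with 0 by ring. rewrite Rabs_R0; lra. }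
  assert (S1 := interp_sign g x0 (x0-d) (x0-2*d) (x0-3*d) y HK).
  assert (S2 := interp_sign g x0 (x0+d) (x0+2*d) (x0+3*d) y HK).
  unfold inI, om in S1, S2.
  assert (HA : 0 < (y - (x0 - d)) * (y - (x0 - 2*d)) * (y - (x0 - 3*d))).
  { apply Rmult_lt_0_compat; [apply Rmult_lt_0_compat|]; lra. }
  assert (HB : (y - (x0 + d)) * (y - (x0 + 2*d)) * (y - (x0 + 3*d)) < 0).
  { assert (0 < (x0 + d - y) * (x0 + 2*d - y) * (x0 + 3*d - y)).
    { apply Rmult_lt_0_compat; [apply Rmult_lt_0_compat|]; lra. }
    replace ((y - (x0 + d)) * (y - (x0 + 2*d)) * (y - (x0 + 3*d))) with
      (- ((x0 + d - y) * (x0 + 2*d - y) * (x0 + 3*d - y))) by ring. lra. }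
  assert (T1 : 0 <= (g y - lag g x0 (x0 - d) (x0 - 2 * d) (x0 - 3 * d) y) * (y - x0)).
  { apply (sgn_pos _ ((y - (x0 - d)) * (y - (x0 - 2*d)) * (y - (x0 - 3*d)))); [|exact HA].
    replace ((g y - lag g x0 (x0 - d) (x0 - 2 * d) (x0 - 3 * d) y) * (y - x0) *
       ((y - (x0 - d)) * (y - (x0 - 2 * d)) * (y - (x0 - 3 * d)))) with
       ((g y - lag g x0 (x0 - d) (x0 - 2 * d) (x0 - 3 * d) y) *
       ((y - x0) * (y - (x0 - d)) * (y - (x0 - 2 * d)) * (y - (x0 - 3 * d)))) by ring.
    apply S1; lra. }
  assert (T2 : (g y - lag g x0 (x0 + d) (x0 + 2 * d) (x0 + 3 * d) y) * (y - x0) <= 0).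
  { apply (sgn_neg _ ((y - (x0 + d)) * (y - (x0 + 2*d)) * (y - (x0 + 3*d)))); [|exact HB].
    replace ((g y - lag g x0 (x0 + d) (x0 + 2 * d) (x0 + 3 * d) y) * (y - x0) *
       ((y - (x0 + d)) * (y - (x0 + 2 * d)) * (y - (x0 + 3 * d)))) with
       ((g y - lag g x0 (x0 + d) (x0 + 2 * d) (x0 + 3 * d) y) *
       ((y - x0) * (y - (x0 + d)) * (y - (x0 + 2 * d)) * (y - (x0 + 3 * d)))) by ring.
    apply S2; lra. }
  set (p1 := lag g x0 (x0 - d) (x0 - 2 * d) (x0 - 3 * d) y) in *.
  set (p2 := lag g x0 (x0 + d) (x0 + 2 * d) (x0 + 3 * d) y) in *.
  apply Rabs_def2 in H1. apply Rabs_def2 in H2.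
  apply Rabs_def1.
  - destruct (Rle_lt_dec y x0).
    + assert (y < x0) by lra. apply sgn_neg in T1; [|lra]. apply sgn4 in T2; lra.
    + apply sgn_pos in T1; [|lra]. apply sgn3 in T2; lra.
  - destruct (Rle_lt_dec y x0).
    + assert (y < x0) by lra. apply sgn_neg in T1; [|lra]. apply sgn4 in T2; lra.
    + apply sgn_pos in T1; [|lra]. apply sgn3 in T2; lra.
Qed.

Definition W3 u1 u2 u3 y := (y - u1) * (y - u2) * (y - u3).
Definition Q3 (g : R -> R) u1 u2 u3 y :=
  g u1 * ((y - u2) * (y - u3)) / ((u1 - u2) * (u1 - u3)) +
  g u2 * ((y - u1) * (y - u3)) / ((u2 - u1) * (u2 - u3)) +
  g u3 * ((y - u1) * (y - u2)) / ((u3 - u1) * (u3 - u2)).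
Lemma lag_newton3 g u1 u2 u3 y z : u1 <> u2 -> u1 <> u3 -> u2 <> u3 -> y <> u1 -> y <> u2 -> y <> u3 ->
  lag g u1 u2 u3 y z = Q3 g u1 u2 u3 z + (g y - Q3 g u1 u2 u3 y) / W3 u1 u2 u3 y * W3 u1 u2 u3 z.
Proof.
  intros. unfold lag, Q3, W3.
  field; repeat split; dneq.
Qed.
Definition Wf y := W3 0 (1/4) (1/2) y.
Definition Qu (g : R -> R) y := Q3 g 0 (1/4) (1/2) y.
Definition hq g y := (g y - Qu g y) / Wf y.

Lemma lag_newton g y z : y <> 0 -> y <> 1/4 -> y <> 1/2 ->
  lag g 0 (1/4) (1/2) y z = Qu g z + hq g y * Wf z.
Proof.
  intros. unfold Qu, hq, Wf. apply lag_newton3; auto; lra.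
Qed.

Lemma Wf_pos y : 1/2 < y -> 0 < Wf y.
Proof. intros. unfold Wf, W3. apply Rmult_lt_0_compat; [apply Rmult_lt_0_compat|]; lra. Qed.

Lemma hq_mono g y z : K g -> 1/2 < y -> y < z -> z <= 1 -> hq g y <= hq g z.
Proof.
  intros HK Hy Hyz Hz.
  assert (S := interp_sign g 0 (1/2/2) (1/2) y z HK).
  replace (1/2/2) with (1/4) in S by field.
  unfold inI in S.
  assert (S' : 0 <= (g z - lag g 0 (1/4) (1/2) y z) * om 0 (1/4) (1/2) y z)
    by (apply S; try lra; dneq).
  replace (om 0 (1/4) (1/2) y z) with (Wf z * (z - y)) in S' by (unfold om, Wf, W3; ring).
  rewrite lag_newton in S' by lra.
  assert (HW := Wf_pos z ltac:(lra)).
  assert (0 <= g z - (Qu g z + hq g y * Wf z)).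
  { apply (sgn_pos _ (Wf z * (z - y))); [exact S'|]. apply Rmult_lt_0_compat; lra. }
  unfold hq at 2. apply (Rmult_le_reg_r (Wf z)); [exact HW|].
  unfold Rdiv. rewrite Rmult_assoc, Rinv_l by lra. lra.
Qed.

Lemma poly_cont (p : R -> R) x : ex_derive p x -> forall eps, 0 < eps -> exists d, 0 < d /\
  forall y, Rabs (y - x) < d -> Rabs (p y - p x) < eps.
Proof. intros H. apply cont_eps. exact (ex_derive_continuous _ _ H). Qed.

Lemma K_limR g : K g -> exists L, forall eps, 0 < eps -> exists d, 0 < d /\
  forall y, 1 - d < y < 1 -> Rabs (g y - L) < eps.
Proof.
  intros HK.
  set (E := fun v => exists y, 1/2 < y < 1 /\ v = hq g y).
  assert (Hb : bound E).
  { exists (hq g 1). intros v [y [Hy ->]]. apply hq_mono; [exact HK|lra..]. }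
  assert (Hne : exists v, E v) by (exists (hq g (3/4)); exists (3/4); split; [lra|reflexivity]).
  destruct (completeness E Hb Hne) as [L [HL1 HL2]].
  exists (Qu g 1 + L * Wf 1).
  intros eps He.
  assert (He3 : 0 < eps / 3) by lra.
  destruct (poly_cont (Qu g) 1 ltac:(unfold Qu, Q3; auto_derive; auto) _ He3) as [d1 [Hd1 H1]].
  destruct (poly_cont (fun y => L * Wf y) 1 ltac:(unfold Wf, W3; auto_derive; auto) _ He3) as [d2 [Hd2 H2]].
  assert (Hex : exists y0, 1/2 < y0 < 1 /\ L - eps/3 < hq g y0).
  { apply NNPP. intro Hn.
    assert (L <= L - eps/3); [|lra].
    apply HL2. intros v [y [Hy ->]].
    apply Rnot_lt_le. intro Hc. apply Hn. exists y. split; assumption. }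
  destruct Hex as [y0 [Hy0 Hy0L]].
  exists (Rmin (1 - y0) (Rmin d1 d2)). split.
  { apply Rmin_pos; [lra|apply Rmin_pos; lra]. }
  intros y [Hy1 Hy2].
  assert (Hm1 := Rmin_l (1 - y0) (Rmin d1 d2)).
  assert (Hm2 := Rmin_r (1 - y0) (Rmin d1 d2)).
  assert (Hm3 := Rmin_l d1 d2). assert (Hm4 := Rmin_r d1 d2).
  assert (Hyy : 1/2 < y) by lra.
  assert (Hh1 : hq g y <= L) by (apply HL1; exists y; split; [lra|reflexivity]).
  assert (Hh2 : hq g y0 <= hq g y) by (apply hq_mono; [exact HK|lra..]).
  assert (HW := Wf_pos y Hyy).
  assert (HW1 : Wf y <= 1).
  { unfold Wf, W3. assert (0 < y - 1/4) by lra.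
    assert (y * (y - 1/4) <= 1) by nra. nra. }
  assert (A1 : Rabs (Qu g y - Qu g 1) < eps/3) by (apply H1; rewrite Rabs_left; lra).
  assert (A2 : Rabs (L * Wf y - L * Wf 1) < eps/3) by (apply H2; rewrite Rabs_left; lra).
  assert (Eg : g y = Qu g y + hq g y * Wf y) by (unfold hq; field; lra).
  rewrite Eg.
  replace (Qu g y + hq g y * Wf y - (Qu g 1 + L * Wf 1)) with
    ((Qu g y - Qu g 1) + (hq g y - L) * Wf y + (L * Wf y - L * Wf 1)) by ring.
  assert (A3 : Rabs ((hq g y - L) * Wf y) < eps/3).
  { rewrite Rabs_mult, (Rabs_right (Wf y)) by lra.
    rewrite Rabs_left1 by lra. nra. }
  eapply Rle_lt_trans; [apply Rabs_triang|].
  eapply Rle_lt_trans; [apply Rplus_le_compat_r; apply Rabs_triang|].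
  lra.
Qed.

Lemma K_int f : K f -> ex_RInt f (-1) 1.
Proof.
  intros HK.
  destruct (K_limR f HK) as [Lp Hp].
  destruct (K_limR _ (K_sym f HK)) as [Lm Hm].
  set (gt := fun x => if Rle_dec x (-1) then Lm else if Rle_dec 1 x then Lp else f x).
  apply (ex_RInt_ext gt f).
  { rewrite Rmin_left, Rmax_right by lra. intros x Hx. unfold gt.
    destruct (Rle_dec x (-1)); [lra|]. destruct (Rle_dec 1 x); [lra|reflexivity]. }
  apply (ex_RInt_continuous (V:=R_CompleteNormedModule)).
  rewrite Rmin_left, Rmax_right by lra. intros z Hz.
  apply eps_cont. intros eps He.
  destruct (Req_dec z 1) as [E1|N1].
  { subst z. destruct (Hp eps He) as [d [Hd Hd']].
    exists (Rmin d 1). split; [apply Rmin_pos; lra|].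
    intros y Hy. assert (Hm1 := Rmin_l d 1). assert (Hm2 := Rmin_r d 1).
    apply Rabs_def2 in Hy.
    unfold gt. destruct (Rle_dec 1 (-1)); [lra|]. destruct (Rle_dec 1 1); [|lra].
    destruct (Rle_dec y (-1)); [lra|]. destruct (Rle_dec 1 y).
    - replace (Lp - Lp) with 0 by ring. rewrite Rabs_R0; lra.
    - apply Hd'. lra. }
  destruct (Req_dec z (-1)) as [E2|N2].
  { subst z. destruct (Hm eps He) as [d [Hd Hd']].
    exists (Rmin d 1). split; [apply Rmin_pos; lra|].
    intros y Hy. assert (Hm1 := Rmin_l d 1). assert (Hm2 := Rmin_r d 1).
    apply Rabs_def2 in Hy.
    unfold gt. destruct (Rle_dec (-1) (-1)); [|lra].
    destruct (Rle_dec y (-1)).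
    - replace (Lm - Lm) with 0 by ring. rewrite Rabs_R0; lra.
    - destruct (Rle_dec 1 y); [lra|].
      replace y with (- (- y)) by ring. apply Hd'. lra. }
  assert (Hz' : -1 < z < 1) by lra.
  destruct (cont_eps _ _ (K_cont f z HK Hz') eps He) as [d [Hd Hd']].
  exists (Rmin d (Rmin (1 - z) (z + 1))). split.
  { apply Rmin_pos; [lra|apply Rmin_pos; lra]. }
  intros y Hy.
  assert (Hm1 := Rmin_l d (Rmin (1 - z) (z + 1))).
  assert (Hm2 := Rmin_r d (Rmin (1 - z) (z + 1))).
  assert (Hm3 := Rmin_l (1 - z) (z + 1)). assert (Hm4 := Rmin_r (1 - z) (z + 1)).
  assert (Hy' := Hy). apply Rabs_def2 in Hy'.
  unfold gt. destruct (Rle_dec z (-1)); [lra|]. destruct (Rle_dec 1 z); [lra|].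
  destruct (Rle_dec y (-1)); [lra|]. destruct (Rle_dec 1 y); [lra|].
  apply Hd'. lra.
Qed.

Definition cub c0 c1 c2 c3 (y : R) := c0 + c1 * y + c2 * y^2 + c3 * y^3.
Definition Fcub c0 c1 c2 c3 (y : R) := c0 * y + c1 * y^2 / 2 + c2 * y^3 / 3 + c3 * y^4 / 4.

Lemma lag_is_cub g n0 n1 n2 n3 : exists c0 c1 c2 c3, forall y,
  lag g n0 n1 n2 n3 y = cub c0 c1 c2 c3 y.
Proof.
  set (w0 := g n0 / ((n0-n1)*(n0-n2)*(n0-n3))).
  set (w1 := g n1 / ((n1-n0)*(n1-n2)*(n1-n3))).
  set (w2 := g n2 / ((n2-n0)*(n2-n1)*(n2-n3))).
  set (w3 := g n3 / ((n3-n0)*(n3-n1)*(n3-n2))).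
  exists (-(w0*n1*n2*n3 + w1*n0*n2*n3 + w2*n0*n1*n3 + w3*n0*n1*n2)).
  exists (w0*(n1*n2+n1*n3+n2*n3) + w1*(n0*n2+n0*n3+n2*n3) + w2*(n0*n1+n0*n3+n1*n3) + w3*(n0*n1+n0*n2+n1*n2)).
  exists (-(w0*(n1+n2+n3) + w1*(n0+n2+n3) + w2*(n0+n1+n3) + w3*(n0+n1+n2))).
  exists (w0+w1+w2+w3).
  intros y. unfold lag, cub, w0, w1, w2, w3. unfold Rdiv. ring.
Qed.

Lemma is_RInt_cub c0 c1 c2 c3 l r :
  is_RInt (cub c0 c1 c2 c3) l r (Fcub c0 c1 c2 c3 r - Fcub c0 c1 c2 c3 l).
Proof.
  apply (is_RInt_derive (V:=R_CompleteNormedModule) (Fcub c0 c1 c2 c3) (cub c0 c1 c2 c3)).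
  - intros x _. unfold Fcub, cub. auto_derive; [auto|]. field.
  - intros x _. 
    assert (H : ex_derive (cub c0 c1 c2 c3) x) by (unfold cub; auto_derive; auto).
    exact (ex_derive_continuous _ _ H).
Qed.

Lemma piece f c0 c1 c2 c3 l r : l <= r -> ex_RInt f l r ->
  (forall y, l < y < r -> cub c0 c1 c2 c3 y <= f y) ->
  Fcub c0 c1 c2 c3 r - Fcub c0 c1 c2 c3 l <= RInt f l r.
Proof.
  intros Hlr He Hle.
  rewrite <- (is_RInt_unique _ _ _ _ (is_RInt_cub c0 c1 c2 c3 l r)).
  apply RInt_le; auto.
  exists (Fcub c0 c1 c2 c3 r - Fcub c0 c1 c2 c3 l). apply is_RInt_cub.
Qed.

Lemma ex_sub (f : R -> R) l r : ex_RInt f (-1) 1 -> -1 <= l -> l <= r -> r <= 1 -> ex_RInt f l r.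
Proof.
  intros H h1 h2 h3.
  apply (ex_RInt_Chasles_1 f l r 1); [lra|].
  apply (ex_RInt_Chasles_2 f (-1) l 1); [lra|exact H].
Qed.

Lemma chas (f : R -> R) l m r : ex_RInt f l m -> ex_RInt f m r -> RInt f l r = RInt f l m + RInt f m r.
Proof. intros. rewrite <- (RInt_Chasles f l m r); auto. Qed.

Lemma lag_ge g n0 n1 n2 n3 y : K g ->
  inI n0 -> inI n1 -> inI n2 -> inI n3 -> inI y ->
  n0 <> n1 -> n0 <> n2 -> n0 <> n3 -> n0 <> y ->
  n1 <> n2 -> n1 <> n3 -> n1 <> y -> n2 <> n3 -> n2 <> y -> n3 <> y ->
  0 < (y-n0)*(y-n1) -> 0 < (y-n2)*(y-n3) ->
  lag g n0 n1 n2 n3 y <= g y.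
Proof.
  intros. assert (S := interp_sign g n0 n1 n2 n3 y).
  assert (0 <= g y - lag g n0 n1 n2 n3 y); [|lra].
  apply (sgn_pos _ (om n0 n1 n2 n3 y)).
  - apply S; assumption.
  - unfold om. replace ((y - n0) * (y - n1) * (y - n2) * (y - n3)) with
      (((y - n0) * (y - n1)) * ((y - n2) * (y - n3))) by ring.
    apply Rmult_lt_0_compat; assumption.
Qed.

Lemma pp u v : (0 < u /\ 0 < v) \/ (u < 0 /\ v < 0) -> 0 < u * v.
Proof. intros [[]|[]]; nra. Qed.

Lemma lag2 g a t y : a <> 0 -> t <> 0 -> a <> t -> a <> - t ->
  lag g (-t) 0 t a y = lag g (-a) (-t) 0 t y + 2 * a * S5 g (-a) (-t) 0 t a * (y * (y * y - t * t)).
Proof.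
  intros. unfold lag, S5.
  set (A := g (-a)); set (B := g (-t)); set (C := g 0); set (Dd := g t); set (E := g a).
  field; repeat split; dneq.
Qed.

Lemma lag_node3 g n0 n1 n2 n3 : n2 <> n0 -> n2 <> n1 -> n2 <> n3 ->
  lag g n0 n1 n2 n3 n2 = g n2.
Proof.
  intros; unfold lag.
  replace (n2 - n2) with 0 by ring.
  transitivity (g n2 * ((n2-n0)*(n2-n1)*(n2-n3)) / ((n2-n0)*(n2-n1)*(n2-n3))).
  { unfold Rdiv; ring. }
  field; repeat split; dneq.
Qed.
Lemma alg c0 c1 c2 c3 Dd a t : a * a = 1/2 ->
  let k := 2 * a * Dd in
  (Fcub c0 c1 c2 c3 (-a) - Fcub c0 c1 c2 c3 (-1)) +
  (Fcub c0 (c1 - k*t*t) c2 (c3 + k) (-t) - Fcub c0 (c1 - k*t*t) c2 (c3 + k) (-a)) +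
  (Fcub c0 c1 c2 c3 0 - Fcub c0 c1 c2 c3 (-t)) +
  (Fcub c0 (c1 - k*t*t) c2 (c3 + k) t - Fcub c0 (c1 - k*t*t) c2 (c3 + k) 0) +
  (Fcub c0 c1 c2 c3 a - Fcub c0 c1 c2 c3 t) +
  (Fcub c0 (c1 - k*t*t) c2 (c3 + k) 1 - Fcub c0 (c1 - k*t*t) c2 (c3 + k) a)
  - 2/3 * (cub c0 c1 c2 c3 (-a) + cub c0 c1 c2 c3 0 + (cub c0 c1 c2 c3 a + Dd * om (-a) (-t) 0 t a))
  = Dd * (2 * a * (1/8 - t^4/2) - 2/3 * (1/2 - t^2)).
Proof.
  intros Ha k. unfold k, Fcub, cub, om.
  assert (H2 : a ^ 2 = 1/2) by (simpl; lra).
  assert (H3 : a ^ 3 = a/2) by (simpl; rewrite <- Rmult_assoc, Ha; field).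
  assert (H4 : a ^ 4 = 1/4) by (replace (a^4) with ((a*a)*(a*a)) by ring; rewrite Ha; field).
  assert (H5 : a ^ 5 = a/4) by (replace (a^5) with ((a*a)*(a*a)*a) by ring; rewrite Ha; field).
  assert (Hm2 : (-a) ^ 2 = 1/2) by (rewrite <- H2; ring).
  assert (Hm4 : (-a) ^ 4 = 1/4) by (rewrite <- H4; ring).
  ring_simplify. rewrite ?H5, ?H4, ?H3, ?H2, ?Hm2, ?Hm4. field.
Qed.

Ltac side := unfold inI; first [ lra | (let H := fresh in intro H; lra)
  | (apply pp; first [left; split; lra | right; split; lra]) ].

Theorem proposition3 (f : R -> R) (hf : m_convex_on 3 (-1) 1 f) :
  f (- (sqrt 3 / 3)) + f (sqrt 3 / 3)
    <= 2 / 3 * (f (- (sqrt 2 / 2)) + f 0 + f (sqrt 2 / 2))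
  /\ 2 / 3 * (f (- (sqrt 2 / 2)) + f 0 + f (sqrt 2 / 2)) <= RInt f (-1) 1.
Proof.
  assert (HK := key f hf).
  set (a := sqrt 2 / 2). set (b := sqrt 3 / 3).
  assert (ha : a * a = 1/2).
  { unfold a. replace (sqrt 2 / 2 * (sqrt 2 / 2)) with (sqrt 2 * sqrt 2 / 4) by field.
    rewrite sqrt_sqrt by lra. field. }
  assert (hb : b * b = 1/3).
  { unfold b. replace (sqrt 3 / 3 * (sqrt 3 / 3)) with (sqrt 3 * sqrt 3 / 9) by field.
    rewrite sqrt_sqrt by lra. field. }
  assert (ha0 : 0 < a) by (unfold a; assert (0 < sqrt 2) by (apply sqrt_lt_R0; lra); lra).
  assert (hb0 : 0 < b) by (unfold b; assert (0 < sqrt 3) by (apply sqrt_lt_R0; lra); lra).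
  assert (ha1 : 7/10 < a) by nra.
  assert (ha2 : a < 1) by nra.
  assert (hba : b < a) by nra.
  split.
  - assert (S := HK (-a) (-b) 0 b a).
    unfold S5 in S.
    replace ((- a - - b) * (- a - 0) * (- a - b) * (- a - a)) with (1/6) in S
      by (symmetry; transitivity (2*(a*a)*(a*a) - 2*(a*a)*(b*b)); [ring| rewrite ha, hb; field]).
    replace ((- b - - a) * (- b - 0) * (- b - b) * (- b - a)) with (-1/9) in S
      by (symmetry; transitivity (-2*(b*b)*(a*a) + 2*(b*b)*(b*b)); [ring| rewrite ha, hb; field]).
    replace ((0 - - a) * (0 - - b) * (0 - b) * (0 - a)) with (1/6) in S
      by (symmetry; transitivity ((a*a)*(b*b)); [ring| rewrite ha, hb; field]).
    replace ((b - - a) * (b - - b) * (b - 0) * (b - a)) with (-1/9) in S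
      by (symmetry; transitivity (-2*(b*b)*(a*a) + 2*(b*b)*(b*b)); [ring| rewrite ha, hb; field]).
    replace ((a - - a) * (a - - b) * (a - 0) * (a - b)) with (1/6) in S
      by (symmetry; transitivity (2*(a*a)*(a*a) - 2*(a*a)*(b*b)); [ring| rewrite ha, hb; field]).
    assert (S' : 0 <= f (-a) / (1/6) + f (-b) / (-1/9) + f 0 / (1/6) + f b / (-1/9) + f a / (1/6))
      by (apply S; side).
    unfold Rdiv in S'.
    replace (/ (1/6)) with 6 in S' by field.
    replace (/ (-1/9)) with (-9) in S' by field.
    lra.
  - set (t := 7/10).
    assert (ht : 0 < t) by (unfold t; lra).
    assert (hta : t < a) by (unfold t; lra).
    assert (HI := K_int f HK).
    destruct (lag_is_cub f (-a) (-t) 0 t) as [c0 [c1 [c2 [c3 Hc]]]].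
    set (Dd := S5 f (-a) (-t) 0 t a).
    assert (HD : 0 <= Dd) by (apply HK; side).
    set (k := 2 * a * Dd).
    assert (Hc2 : forall y, lag f (-t) 0 t a y = cub c0 (c1 - k*t*t) c2 (c3 + k) y).
    { intro y. rewrite lag2 by side. rewrite Hc. fold Dd. unfold k, cub. ring. }
    assert (E1 : f (-a) = cub c0 c1 c2 c3 (-a)).
    { rewrite <- Hc. rewrite lag_node by side. reflexivity. }
    assert (E2 : f 0 = cub c0 c1 c2 c3 0).
    { rewrite <- Hc. rewrite lag_node3 by side. reflexivity. }
    assert (E3 : f a = cub c0 c1 c2 c3 a + Dd * om (-a) (-t) 0 t a).
    { rewrite <- Hc. assert (Ei := interp_eq f (-a) (-t) 0 t a). fold Dd in Ei.
      rewrite <- Ei by side. ring. }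
    assert (P1 : Fcub c0 c1 c2 c3 (-a) - Fcub c0 c1 c2 c3 (-1) <= RInt f (-1) (-a)).
    { apply piece; [side| apply ex_sub; [exact HI|side..] |].
      intros y Hy. rewrite <- Hc. apply lag_ge; [exact HK| side..]. }
    assert (P2 : Fcub c0 (c1 - k*t*t) c2 (c3 + k) (-t) - Fcub c0 (c1 - k*t*t) c2 (c3 + k) (-a) <= RInt f (-a) (-t)).
    { apply piece; [side| apply ex_sub; [exact HI|side..] |].
      intros y Hy. rewrite <- Hc2. apply lag_ge; [exact HK| side..]. }
    assert (P3 : Fcub c0 c1 c2 c3 0 - Fcub c0 c1 c2 c3 (-t) <= RInt f (-t) 0).
    { apply piece; [side| apply ex_sub; [exact HI|side..] |].
      intros y Hy. rewrite <- Hc. apply lag_ge; [exact HK| side..]. }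
    assert (P4 : Fcub c0 (c1 - k*t*t) c2 (c3 + k) t - Fcub c0 (c1 - k*t*t) c2 (c3 + k) 0 <= RInt f 0 t).
    { apply piece; [side| apply ex_sub; [exact HI|side..] |].
      intros y Hy. rewrite <- Hc2. apply lag_ge; [exact HK| side..]. }
    assert (P5 : Fcub c0 c1 c2 c3 a - Fcub c0 c1 c2 c3 t <= RInt f t a).
    { apply piece; [side| apply ex_sub; [exact HI|side..] |].
      intros y Hy. rewrite <- Hc. apply lag_ge; [exact HK| side..]. }
    assert (P6 : Fcub c0 (c1 - k*t*t) c2 (c3 + k) 1 - Fcub c0 (c1 - k*t*t) c2 (c3 + k) a <= RInt f a 1).
    { apply piece; [side| apply ex_sub; [exact HI|side..] |].
      intros y Hy. rewrite <- Hc2. apply lag_ge; [exact HK| side..]. }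
    assert (Hsum : RInt f (-1) 1 = RInt f (-1) (-a) + RInt f (-a) (-t) + RInt f (-t) 0
                    + RInt f 0 t + RInt f t a + RInt f a 1).
    { rewrite (chas f (-1) (-a) 1) by (apply ex_sub; [exact HI|side..]).
      rewrite (chas f (-a) (-t) 1) by (apply ex_sub; [exact HI|side..]).
      rewrite (chas f (-t) 0 1) by (apply ex_sub; [exact HI|side..]).
      rewrite (chas f 0 t 1) by (apply ex_sub; [exact HI|side..]).
      rewrite (chas f t a 1) by (apply ex_sub; [exact HI|side..]).
      rewrite !Rplus_assoc; reflexivity. }
    assert (Al := alg c0 c1 c2 c3 Dd a t ha). simpl in Al. fold k in Al.
    assert (Hbr : 0 <= Dd * (2 * a * (1/8 - t^4/2) - 2/3 * (1/2 - t^2))).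
    { apply Rmult_le_pos; [exact HD|]. unfold t. simpl. lra. }
    rewrite Hsum, E1, E2, E3. lra.
Qed.
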